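(* Let $N\ge1$ and $\kappa,h,\nu,g\in\mathbb{C}$ with $h\neq0$. The matrix $K=K^{\mathrm{ra}}(\nu,g)$ satisfies $K^2=I$ and the constant reflection equation $\check R_{12}K_2\check R_{12}K_2=K_2\check R_{12}K_2\check R_{12}$, where $\check R=R^{\mathrm{ra}}(\kappa,h)P$.
   Context: $V=\mathbb{C}^N$ with basis $e_0,\dots,e_{N-1}$; $Ae_j=\sum_ke_k[A]_j^k$; $R(e_i\otimes e_j)=\sum_{k,l}[R]_{ij}^{kl}e_k\otimes e_l$; $P$ flip; $K_2=I\otimes K$. Binomial convention: $\binom{a}{b}=0$ unless $0\le b\le a$; $0^0=1$. $\epsilon(i,m,k)=1$ if $i\le k<m$, $-1$ if $m\le k<i$, $0$ otherwise. $$[R^{\mathrm{ra}}(\kappa,h)]_{ij}^{kl}=(-1)^{j-l}h^{i+j-k-l}\Big\{\binom{i}{k}\binom{j}{l}-\frac{\kappa}{h}\sum_m(-1)^{m-k}\binom{i}{m}\binom{j+m-k-1}{l}\epsilon(j,m,k)\Big\},$$ $$[K^{\mathrm{ra}}(\nu,g)]_j^k=(-1)^j\binom{j}{k}g^{j-k}+2\nu\sum_{0\le l<j}(-1)^{j-l}\binom{j-l-1}{k-l}g^{j-k-1}.$$ *)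

(* Defs.v *)
From HB Require Import structures.
From mathcomp Require Import all_boot all_order all_algebra.
Set Implicit Arguments. Unset Strict Implicit. Unset Printing Implicit Defensive.
Import Order.TTheory GRing.Theory Num.Theory.
Local Open Scope ring_scope.

Definition binz (a b : int) : nat :=
  match a, b with
  | Posz a', Posz b' => 'C(a', b')
  | _, _ => 0%N
  end.

Definition eps (i m k : nat) : int :=
  if ((i <= k) && (k < m))%N then 1
  else if ((m <= k) && (k < i))%N then -1 else 0.

Section Coefs.
Variable R : numClosedFieldType.

(* [R^ra(kappa,h)]_{ij}^{kl}; the sum over m ranges over 0..i
   (binom(i,m) vanishes outside this range). *)
Definition Rra_coef (kappa h : R) (i j k l : nat) : R :=
  (-1) ^ (j%:Z - l%:Z) * h ^ (i%:Z + j%:Z - k%:Z - l%:Z) *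
  ((binz i k * binz j l)%:R
   - kappa / h * \sum_(0 <= m < i.+1)
        ((-1) ^ (m%:Z - k%:Z) * (binz i m)%:R
         * (binz (j%:Z + m%:Z - k%:Z - 1) l)%:R * (eps j m k)%:~R)).

Definition Kra_coef (nu g : R) (j k : nat) : R :=
  (-1) ^+ j * (binz j k)%:R * g ^ (j%:Z - k%:Z)
  + 2 * nu * \sum_(0 <= l < j)
      ((-1) ^ (j%:Z - l%:Z) * (binz (j%:Z - l%:Z - 1) (k%:Z - l%:Z))%:R
       * g ^ (j%:Z - k%:Z - 1)).

(* Matrix of an operator on V = R^N, with A e_j = sum_k e_k [A]_j^k:
   entry (row k, column j) is [A]_j^k. *)
Definition op1 (N : nat) (f : nat -> nat -> R) : 'M[R]_N :=
  \matrix_(r < N, c < N) f c r.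

(* Matrix of an operator on V (x) V, basis e_i (x) e_j indexed by i*N + j
   (as in mxvec_index); entry (row (k,l), column (i,j)) is [A]_{ij}^{kl}. *)
Definition op2 (N : nat) (f : nat -> nat -> nat -> nat -> R) : 'M[R]_(N * N) :=
  \matrix_(r < N * N, c < N * N) f (c %/ N)%N (c %% N)%N (r %/ N)%N (r %% N)%N.

Definition Kra (N : nat) (nu g : R) : 'M[R]_N := op1 N (Kra_coef nu g).

Definition Rra (N : nat) (kappa h : R) : 'M[R]_(N * N) := op2 N (Rra_coef kappa h).

Definition Pflip (N : nat) : 'M[R]_(N * N) :=
  op2 N (fun i j k l => ((k == j) && (l == i))%:R).

(* entry (a,b) of a matrix, given as naturals (0 outside the range) *)
Definition mxentry (N : nat) (K : 'M[R]_N) (a b : nat) : R :=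
  match @insub _ (fun x => (x < N)%N) 'I_N a, @insub _ (fun x => (x < N)%N) 'I_N b with
  | Some i, Some j => K i j
  | _, _ => 0
  end.

(* K_2 = I (x) K : (e_i (x) e_j) |-> e_i (x) K e_j, i.e.
   [K_2]_{ij}^{kl} = delta_{ik} [K]_j^l *)
Definition K2 (N : nat) (K : 'M[R]_N) : 'M[R]_(N * N) :=
  op2 N (fun i j k l => (k == i)%:R * mxentry K l j).

End Coefs.

(* Main.v *)
Require Import Defs.
From HB Require Import structures.
From mathcomp Require Import all_boot all_order all_algebra.
From mathcomp Require Import ring lra zify.
Import Order.TTheory GRing.Theory Num.Theory.
Set Implicit Arguments. Unset Strict Implicit. Unset Printing Implicit Defensive.
Local Open Scope ring_scope.

Section Gen.
Variable R : numClosedFieldType.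

Lemma poly_all_roots (q : {poly R}) : (forall x, q.[x] = 0) -> q = 0.
Proof.
move=> H; apply/eqP; apply/negPn/negP => nz.
have := @max_poly_roots _ q [seq i%:R | i <- iota 0 (size q)] nz.
rewrite size_map size_iota ltnn; move=> Hc.
have A : all (root q) [seq i%:R | i <- iota 0 (size q)].
  by apply/allP => x _; apply/rootP; apply: H.
have U : uniq [seq (i%:R : R) | i <- iota 0 (size q)].
  by rewrite map_inj_uniq ?iota_uniq // => m n /eqP; rewrite eqr_nat => /eqP.
by have := Hc A U.
Qed.

Lemma poly_zero_out (p : {poly R}) (bad : seq R) :
  (forall x, x \notin bad -> p.[x] = 0) -> p = 0.
Proof.
move=> H.
have : p * \prod_(c <- bad) ('X - c%:P) = 0.
  apply: poly_all_roots => x; rewrite hornerM.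
  case: (boolP (x \in bad)) => xb.
    have : root (\prod_(c <- bad) ('X - c%:P)) x by rewrite root_prod_XsubC.
    by move/rootP ->; rewrite mulr0.
  by rewrite H // mul0r.
move/eqP; rewrite mulf_eq0 => /orP [/eqP //|].
by rewrite (negbTE (monic_neq0 (monic_prod_XsubC _ _ _))).
Qed.

Definition vfun n (v : 'cV[R]_n) (r : nat) : R :=
  match insub r with Some i => v i 0 | None => 0 end.

Lemma vfunE n (v : 'cV[R]_n) (i : 'I_n) : vfun v i = v i 0.
Proof. by rewrite /vfun valK. Qed.

Definition ev1 n (v : 'cV[R]_n) (x : R) : R := \sum_(r < n) v r 0 * x ^+ r.

Lemma ev1_poly n (v : 'cV[R]_n) x : ev1 v x = (\poly_(r < n) vfun v r).[x].
Proof. by rewrite horner_poly; apply: eq_bigr => i _; rewrite vfunE. Qed.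

Lemma vec0_coef n (v : 'cV[R]_n) : \poly_(r < n) vfun v r = 0 -> v = 0.
Proof.
move=> H; apply/matrixP => i j; rewrite (ord1 j) mxE.
have := congr1 (fun p : {poly R} => p`_i) H.
by rewrite coef_poly ltn_ord vfunE coef0.
Qed.

Lemma ev1_inj n (v : 'cV[R]_n) (bad : seq R) :
  (forall x, x \notin bad -> ev1 v x = 0) -> v = 0.
Proof.
move=> H; apply: vec0_coef; apply: (poly_zero_out (bad := bad)) => x xb.
by rewrite -ev1_poly H.
Qed.

Lemma sum_sq (N : nat) (G : nat -> R) :
  \sum_(r < N * N) G r = \sum_(k < N) \sum_(l < N) G (k * N + l)%N.
Proof.
suff H : forall M, \sum_(r < M * N) G r = \sum_(k < M) \sum_(l < N) G (k * N + l)%N by [].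
elim=> [|M IH]; first by rewrite mul0n !big_ord0.
rewrite big_ord_recr /= -IH -!(big_mkord xpredT) mulSnr.
rewrite (big_cat_nat _ (n := (M * N)%N)) //= ?leq_addr //.
congr (_ + _).
rewrite -{1}(add0n (M * N)%N) big_addn.
rewrite (_ : (M * N + N - M * N = N)%N); last by rewrite addnC addnK.
rewrite big_mkord.
by apply: eq_bigr => i _; rewrite addnC.
Qed.

Definition ev2 N (v : 'cV[R]_(N * N)) (a b : R) : R :=
  \sum_(r < N * N) v r 0 * a ^+ (r %/ N) * b ^+ (r %% N).

Lemma ev2_dbl N (v : 'cV[R]_(N * N)) a b : (0 < N)%N ->
  ev2 v a b = \sum_(k < N) \sum_(l < N) vfun v (k * N + l)%N * a ^+ k * b ^+ l.
Proof.
move=> N0; rewrite /ev2.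
rewrite (eq_bigr (fun r : 'I_(N*N) => vfun v r * a ^+ (r %/ N) * b ^+ (r %% N))); last first.
  by move=> i _; rewrite vfunE.
rewrite (sum_sq N (fun r => vfun v r * a ^+ (r %/ N) * b ^+ (r %% N))).
apply: eq_bigr => k _; apply: eq_bigr => l _.
by rewrite divnMDl // divn_small // addn0 modnMDl modn_small.
Qed.

Lemma ev2_inj N (v : 'cV[R]_(N * N)) (a0 : R) (bs : R -> seq R) : (0 < N)%N ->
  (forall a b, a != a0 -> b \notin bs a -> ev2 v a b = 0) -> v = 0.
Proof.
move=> N0 H.
have H1 : forall l, (l < N)%N -> \poly_(k < N) vfun v (k * N + l)%N = 0.
  move=> l lN.
  apply: (poly_zero_out (bad := [:: a0])) => a; rewrite inE => aa.
  rewrite horner_poly.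
  set q := \poly_(l0 < N) \sum_(k < N) vfun v (k * N + l0)%N * a ^+ k.
  have : q = 0.
    apply: (poly_zero_out (bad := bs a)) => b bb.
    rewrite horner_poly; transitivity (ev2 v a b); last exact: H.
    rewrite ev2_dbl // exchange_big /=.
    apply: eq_bigr => l0 _; rewrite mulr_suml; apply: eq_bigr => k _; by [].
  move/(congr1 (fun p : {poly R} => p`_l)); rewrite coef_poly lN coef0.
  by [].
apply/matrixP => i j; rewrite (ord1 j) mxE.
have iN : (i %% N < N)%N by rewrite ltn_pmod.
have kN : (i %/ N < N)%N by rewrite ltn_divLR // ltn_ord.
have := congr1 (fun p : {poly R} => p`_(i %/ N)) (H1 _ iN).
by rewrite coef_poly kN coef0 -divn_eq vfunE.
Qed.

End Gen.

Section Bin.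
Variable R : numClosedFieldType.

Lemma binz_negr (a b : int) : (b < 0)%R -> binz a b = 0%N.
Proof. by case: a => [a|a]; case: b. Qed.

Lemma binz_negl (a b : int) : (a < 0)%R -> binz a b = 0%N.
Proof. by case: a => [a|a]; case: b. Qed.

Lemma binom_sum (N n : nat) (c x : R) : (n < N)%N ->
  \sum_(k < N) 'C(n, k)%:R * c ^+ (n - k) * x ^+ k = (x + c) ^+ n.
Proof.
move=> nN; rewrite addrC exprDn.
rewrite (big_ord_widen N (fun i => c ^+ (n - i) * x ^+ i *+ 'C(n, i))) //.
rewrite [RHS]big_mkcond; apply: eq_bigr => i _.
case: ifP => ih; first by rewrite -mulr_natl; ring.
by rewrite bin_small ?mul0r ?mul0rn // ltnNge -ltnS ih.
Qed.

Lemma sum_shift (N l : nat) (F : nat -> R) : (l <= N)%N ->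
  (forall k, (k < l)%N -> F k = 0) ->
  \sum_(k < N) F k = \sum_(t < N - l) F (l + t)%N.
Proof.
move=> lN H; rewrite -!(big_mkord xpredT).
rewrite (big_cat_nat _ (n := l)) //= big1_seq ?add0r; last first.
  by move=> i /andP [_]; rewrite mem_index_iota => /andP [_ /H].
have := big_addn 0 N l xpredT F; rewrite add0n => ->; rewrite big_mkord; apply: eq_bigr => i _; by rewrite addnC.
Qed.

Lemma K_T1 (N j : nat) (g x : R) : (j < N)%N ->
  \sum_(k < N) (-1) ^+ j * (binz j k)%:R * g ^ (j%:Z - k%:Z) * x ^+ k = (- x - g) ^+ j.
Proof.
move=> jN.
rewrite -opprD [in RHS]exprNn -(binom_sum g x jN) mulr_sumr; apply: eq_bigr => k _.
rewrite /binz.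
case: (leqP k j) => kj.
  by rewrite subzn // -exprnP !mulrA.
by rewrite bin_small // !(mulr0, mul0r).
Qed.

Lemma K_T2in (N j l : nat) (g x : R) : (l < j)%N -> (j < N)%N ->
  \sum_(k < N) (binz (j%:Z - l%:Z - 1) (k%:Z - l%:Z))%:R * g ^ (j%:Z - k%:Z - 1) * x ^+ k
  = x ^+ l * (x + g) ^+ (j - l - 1).
Proof.
move=> lj jN.
rewrite (@sum_shift N l (fun k : nat => (binz (j%:Z - l%:Z - 1) (k%:Z - l%:Z))%:R * g ^ (j%:Z - k%:Z - 1) * x ^+ k)); last 2 first.
- by apply: ltnW; apply: leq_trans jN; apply: ltnW.
- by move=> k kl; rewrite binz_negr ?mul0r //; lia.
have -> : (j%:Z - l%:Z - 1) = (j - l - 1)%N :> int by lia.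
rewrite -(@binom_sum (N - l) (j - l - 1) g x); last by lia.
rewrite mulr_sumr; apply: eq_bigr => t _.
have -> : ((l + t)%N%:Z - l%:Z) = t :> int by lia.
rewrite /binz.
case: (leqP t (j - l - 1)) => tj.
  have -> : (j%:Z - (l + t)%N%:Z - 1) = (j - l - 1 - t)%N :> int by lia.
  by rewrite -exprnP exprD; ring.
by rewrite bin_small // !mul0r mulr0.
Qed.

Lemma K_geo (j : nat) (g x : R) :
  (2 * x + g) * \sum_(0 <= l < j) ((-1) ^ (j%:Z - l%:Z) * (x ^+ l * (x + g) ^+ (j - l - 1)))
  = (- x - g) ^+ j - x ^+ j.
Proof.
rewrite subrXX big_mkord.
have -> : (- x - g - x) = - (2 * x + g) by ring.
rewrite mulNr -mulrN; congr (_ * _); rewrite -sumrN.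
apply: eq_bigr => i _.
have ij := ltn_ord i.
have -> : (j%:Z - i%:Z) = (j - i - 1).+1%N :> int by lia.
have -> : (j.-1 - i = j - i - 1)%N by lia.
rewrite -exprnP exprS -opprD [in RHS]exprNn; ring.
Qed.

Lemma K_law (N j : nat) (nu g x : R) : (j < N)%N ->
  (2 * x + g) * \sum_(k < N) Kra_coef nu g j k * x ^+ k
  = (2 * x + g + 2 * nu) * (- x - g) ^+ j - 2 * nu * x ^+ j.
Proof.
move=> jN; rewrite /Kra_coef.
rewrite (eq_bigr (fun k : 'I_N => (-1) ^+ j * (binz j k)%:R * g ^ (j%:Z - k%:Z) * x ^+ k
   + 2 * nu * \sum_(0 <= l < j) ((-1) ^ (j%:Z - l%:Z) *
     ((binz (j%:Z - l%:Z - 1) (k%:Z - l%:Z))%:R * g ^ (j%:Z - k%:Z - 1) * x ^+ k)))); last first.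
  by move=> k _; rewrite mulrDl; congr (_ + _); rewrite -mulrA mulr_suml; congr (_ * _); apply: eq_bigr => l _; ring.
rewrite big_split /= K_T1 // -mulr_sumr exchange_big /=.
rewrite (eq_big_nat _ _ (F2 := fun l => (-1) ^ (j%:Z - l%:Z) * (x ^+ l * (x + g) ^+ (j - l - 1)))); last first.
  by move=> l /andP [_ lj]; rewrite -mulr_sumr K_T2in.
have := K_geo j g x; set S := \sum_(0 <= l < j) _ => HS.
rewrite mulrDr mulrCA HS; ring.
Qed.

End Bin.

Section RR.
Variable R : numClosedFieldType.

Lemma exprz_eq (x : R) (m n : int) : m = n -> x ^ m = x ^ n.
Proof. by move->. Qed.

Lemma sign_pow (h : R) (hh : h != 0) (i j k l m : int) :
  (-1) ^ (j - l) * h ^ (i + j - k - l) * h^-1 * (-1) ^ (m - k)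
  = - (h ^ (i - m) * ((-1) ^ (j + m - k - 1 - l) * h ^ (j + m - k - 1 - l))).
Proof.
have n1 : (-1 : R) != 0 by rewrite oppr_eq0 oner_eq0.
have e1 : h ^ (i + j - k - l) = h ^ (i - m) * h ^ (j + m - k - 1 - l) * h ^ 1.
  by rewrite -!expfzDr //; congr (_ ^ _); lia.
have e2 : (-1) ^ (j - l) * (-1) ^ (m - k) = (-1) ^ (j + m - k - 1 - l) * (-1 : R) ^ 1.
  by rewrite -!expfzDr //; congr (_ ^ _); lia.
rewrite !expr1z in e1 e2; rewrite e1.
transitivity ((-1) ^ (j - l) * (-1) ^ (m - k) * h ^ (i - m) * h ^ (j + m - k - 1 - l) * (h * h^-1)).
  by ring.
by rewrite divff // e2; ring.
Qed.

Definition epsR (j m k : nat) : R := (eps j m k)%:~R.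

Lemma RA_sum (N i j : nat) (h a b : R) (hh : h != 0) : (i < N)%N -> (j < N)%N ->
  \sum_(k < N) \sum_(l < N) ((-1) ^ (j%:Z - l%:Z) * h ^ (i%:Z + j%:Z - k%:Z - l%:Z)
      * (binz i k * binz j l)%:R * a ^+ k * b ^+ l)
  = (a + h) ^+ i * (b - h) ^+ j.
Proof.
move=> iN jN.
rewrite -(binom_sum h a iN) -(binom_sum (- h) b jN) mulr_suml; apply: eq_bigr => k _.
rewrite mulr_sumr; apply: eq_bigr => l _.
rewrite /binz natrM.
case: (leqP k i) => ki; last by rewrite bin_small // !(mulr0, mul0r).
case: (leqP l j) => lj; last by rewrite (@bin_small j l) // !(mulr0, mul0r).
rewrite exprNn (exprz_eq h (_ : (i%:Z + j%:Z - k%:Z - l%:Z) = (i - k)%N%:Z + (j - l)%N%:Z)); last by lia.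
rewrite exprzD_nat (exprz_eq (-1) (_ : (j%:Z - l%:Z) = (j - l)%N)); last by lia.
rewrite -!exprnP; ring.
Qed.

Lemma RB_term (i j k l m : nat) (kappa h a b : R) (hh : h != 0) : (m < i.+1)%N ->
  (-1) ^ (j%:Z - l%:Z) * h ^ (i%:Z + j%:Z - k%:Z - l%:Z) * (kappa / h) *
   ((-1) ^ (m%:Z - k%:Z) * (binz i m)%:R * (binz (j%:Z + m%:Z - k%:Z - 1) l)%:R * (eps j m k)%:~R)
   * a ^+ k * b ^+ l
  = - kappa * 'C(i, m)%:R * h ^+ (i - m) * epsR j m k * a ^+ k *
     ('C((j + m - k - 1)%N, l)%:R * (- h) ^+ ((j + m - k - 1)%N - l) * b ^+ l).
Proof.
move=> mi; rewrite ltnS in mi.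
rewrite /epsR.
have [e0|en0] := eqVneq (eps j m k) 0.
  by rewrite e0 !(mulr0, mul0r).
have jmk : (k.+1 <= j + m)%N.
  by move: en0; rewrite /eps; case: ifP => [/andP [H1 H2] _|_]; [lia| case: ifP => [/andP [H1 H2] _|//]; lia].
have -> : (j%:Z + m%:Z - k%:Z - 1) = (j + m - k - 1)%N :> int by lia.
rewrite /binz.
case: (leqP l (j + m - k - 1)) => ln; last by rewrite (@bin_small _ l) // !(mulr0, mul0r).
rewrite exprNn.
have E := sign_pow hh i j k l m.
rewrite (exprz_eq h (_ : (i%:Z - m%:Z) = (i - m)%N)) in E; last by lia.
rewrite (exprz_eq h (_ : (j%:Z + m%:Z - k%:Z - 1 - l%:Z) = ((j + m - k - 1)%N - l)%N)) in E; last by lia.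
rewrite (exprz_eq (-1) (_ : (j%:Z + m%:Z - k%:Z - 1 - l%:Z) = ((j + m - k - 1)%N - l)%N)) in E; last by lia.
rewrite -!exprnP in E.
transitivity (kappa * (binz i m)%:R * (eps j m k)%:~R * ((-1) ^ (j%:Z - l%:Z) * h ^ (i%:Z + j%:Z - k%:Z - l%:Z) * h^-1 * (-1) ^ (m%:Z - k%:Z)) * 'C(j + m - k - 1, l)%:R * a ^+ k * b ^+ l).
  by rewrite /binz; ring.
by rewrite E /binz; ring.
Qed.

Lemma trunc_sum (M d : nat) (F : nat -> R) : (d <= M)%N ->
  (forall t, (d <= t)%N -> (t < M)%N -> F t = 0) -> \sum_(t < M) F t = \sum_(t < d) F t.
Proof.
move=> dM H; rewrite -!(big_mkord xpredT) (big_cat_nat _ (n := d)) //=.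
rewrite [X in _ + X]big1_seq ?addr0 // => t /andP [_]; rewrite mem_index_iota => /andP [H1 H2].
exact: H.
Qed.

Lemma geo_aux (d : nat) (a y : R) :
  (a - y) * \sum_(t < d) a ^+ t * y ^+ (d - 1 - t) = a ^+ d - y ^+ d.
Proof.
have := subrXX y a d; rewrite -subn1 => E.
have -> : a ^+ d - y ^+ d = - (y ^+ d - a ^+ d) by ring.
rewrite E -mulNr opprB; congr (_ * _); apply: eq_bigr => t _; ring.
Qed.

Lemma G_law (N j m : nat) (a y : R) : (j < N)%N -> (m < N)%N ->
  (a - y) * \sum_(k < N) epsR j m k * a ^+ k * y ^+ (j + m - k - 1)%N
  = a ^+ m * y ^+ j - a ^+ j * y ^+ m.
Proof.
move=> jN mN.
case: (leqP j m) => jm.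
  rewrite (@sum_shift _ N j (fun k : nat => epsR j m k * a ^+ k * y ^+ (j + m - k - 1)%N)); last 2 first.
  - exact: ltnW.
  - by move=> k kj; rewrite /epsR /eps; case: ifP => [/andP [H1 H2]|_]; [lia|case: ifP => [/andP [H1 H2]|_]; [lia|by rewrite !mul0r]].
  rewrite (@trunc_sum _ (m - j) (fun t : nat => epsR j m (j + t) * a ^+ (j + t) * y ^+ (j + m - (j + t) - 1)%N)); last 2 first.
  - by lia.
  - by move=> t H1 H2; rewrite /epsR /eps; case: ifP => [/andP [H3 H4]|_]; [lia|case: ifP => [/andP [H3 H4]|_]; [lia|by rewrite !mul0r]].
  rewrite (eq_bigr (fun t : 'I_(m - j) => a ^+ j * y ^+ j * (a ^+ t * y ^+ (m - j - 1 - t)))); last first.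
    move=> t _; have tl := ltn_ord t.
    rewrite /epsR /eps ifT; last by apply/andP; lia.
    rewrite (_ : (j + m - (j + t) - 1 = j + (m - j - 1 - t))%N); last by lia.
    by rewrite !exprD; ring.
  rewrite -mulr_sumr mulrCA geo_aux.
  have -> : a ^+ m = a ^+ j * a ^+ (m - j) by rewrite -exprD; congr (_ ^+ _); lia.
  have -> : y ^+ m = y ^+ j * y ^+ (m - j) by rewrite -exprD; congr (_ ^+ _); lia.
  ring.
rewrite (@sum_shift _ N m (fun k : nat => epsR j m k * a ^+ k * y ^+ (j + m - k - 1)%N)); last 2 first.
- exact: ltnW.
- by move=> k kj; rewrite /epsR /eps; case: ifP => [/andP [H1 H2]|_]; [lia|case: ifP => [/andP [H1 H2]|_]; [lia|by rewrite !mul0r]].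
rewrite (@trunc_sum _ (j - m) (fun t : nat => epsR j m (m + t) * a ^+ (m + t) * y ^+ (j + m - (m + t) - 1)%N)); last 2 first.
- by lia.
- by move=> t H1 H2; rewrite /epsR /eps; case: ifP => [/andP [H3 H4]|_]; [lia|case: ifP => [/andP [H3 H4]|_]; [lia|by rewrite !mul0r]].
rewrite (eq_bigr (fun t : 'I_(j - m) => - (a ^+ m * y ^+ m * (a ^+ t * y ^+ (j - m - 1 - t))))); last first.
  move=> t _; have tl := ltn_ord t.
  rewrite /epsR /eps ifF; last by apply/negbTE; apply/negP => /andP; lia.
  rewrite ifT; last by apply/andP; lia.
  rewrite (_ : (j + m - (m + t) - 1 = m + (j - m - 1 - t))%N); last by lia.
  by rewrite !exprD; ring.
rewrite sumrN -mulr_sumr mulrN mulrCA geo_aux.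
have -> : a ^+ j = a ^+ m * a ^+ (j - m) by rewrite -exprD; congr (_ ^+ _); lia.
have -> : y ^+ j = y ^+ m * y ^+ (j - m) by rewrite -exprD; congr (_ ^+ _); lia.
ring.
Qed.

Lemma R_law (N i j : nat) (kappa h a b : R) (hh : h != 0) : (i < N)%N -> (j < N)%N ->
  (a - b + h) * \sum_(k < N) \sum_(l < N) Rra_coef kappa h i j k l * a ^+ k * b ^+ l
  = (a - b + h + kappa) * (a + h) ^+ i * (b - h) ^+ j - kappa * a ^+ j * b ^+ i.
Proof.
move=> iN jN.
pose P (k l : nat) : R := (-1) ^ (j%:Z - l%:Z) * h ^ (i%:Z + j%:Z - k%:Z - l%:Z).
pose T (m k l : nat) : R := (-1) ^ (m%:Z - k%:Z) * (binz i m)%:R * (binz (j%:Z + m%:Z - k%:Z - 1) l)%:R * (eps j m k)%:~R.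
have E1 : \sum_(k < N) \sum_(l < N) Rra_coef kappa h i j k l * a ^+ k * b ^+ l =
   \sum_(k < N) \sum_(l < N) (P k l * (binz i k * binz j l)%:R * a ^+ k * b ^+ l)
 - \sum_(k < N) \sum_(l < N) \sum_(m < i.+1) (P k l * (kappa / h) * T m k l * a ^+ k * b ^+ l).
  rewrite -sumrB; apply: eq_bigr => k _; rewrite -sumrB; apply: eq_bigr => l _.
  rewrite /Rra_coef big_mkord -/(P k l) mulrBr mulrBl mulrBl; congr (_ - _).
  rewrite mulr_sumr !mulr_sumr !mulr_suml; apply: eq_bigr => m _; rewrite /T; ring.
rewrite E1 RA_sum //.
have E2 : \sum_(k < N) \sum_(l < N) \sum_(m < i.+1) (P k l * (kappa / h) * T m k l * a ^+ k * b ^+ l)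
  = \sum_(m < i.+1) (- kappa * 'C(i, m)%:R * h ^+ (i - m) *
       \sum_(k < N) epsR j m k * a ^+ k * (b - h) ^+ (j + m - k - 1)%N).
  idtac.
  rewrite (eq_bigr (fun k : 'I_N => \sum_(m < i.+1) \sum_(l < N) (P k l * (kappa / h) * T m k l * a ^+ k * b ^+ l))); last first.
    by move=> k _; rewrite exchange_big.
  rewrite exchange_big /=; apply: eq_bigr => m _.
  rewrite mulr_sumr; apply: eq_bigr => k _.
  rewrite (eq_bigr (fun l : 'I_N => - kappa * 'C(i, m)%:R * h ^+ (i - m) * epsR j m k * a ^+ k *
     ('C((j + m - k - 1)%N, l)%:R * (- h) ^+ ((j + m - k - 1)%N - l) * b ^+ l))); last first.
    by move=> l _; rewrite /P /T RB_term.
  rewrite -mulr_sumr.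
  have [e0|en0] := eqVneq (eps j m k) 0.
    by rewrite /epsR e0 !(mulr0, mul0r).
  have mi := ltn_ord m.
  have nN : ((j + m - k - 1)%N < N)%N.
    by move: en0; rewrite /eps; case: ifP => [/andP [H1 H2] _|_]; [lia| case: ifP => [/andP [H1 H2] _|//]; lia].
  rewrite (@binom_sum _ N _ (- h) b nN); ring.
rewrite E2 mulrBr mulr_sumr.
rewrite (eq_bigr (fun m : 'I_i.+1 => - kappa * ('C(i, m)%:R * h ^+ (i - m) * a ^+ m * (b - h) ^+ j
      - a ^+ j * ('C(i, m)%:R * h ^+ (i - m) * (b - h) ^+ m)))); last first.
  move=> m _; have mi := ltn_ord m.
  have := @G_law N j m a (b - h) jN (leq_ltn_trans (ltnSE mi) iN).
  rewrite (_ : a - (b - h) = a - b + h); last by ring.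
  move=> G; rewrite mulrCA G; ring.
rewrite -mulr_sumr sumrB -mulr_suml -mulr_sumr.
rewrite (@binom_sum _ i.+1 i h a) // (@binom_sum _ i.+1 i h (b - h)) //.
rewrite (_ : b - h + h = b); last by ring.
ring.
Qed.

End RR.

Section Laws.
Variable R : numClosedFieldType.
Variable N : nat.
Hypothesis N0 : (0 < N)%N.

Lemma sum_delta (x : nat) (F : nat -> R) : (x < N)%N ->
  \sum_(k < N) (k == x :> nat)%:R * F k = F x.
Proof.
move=> xN; rewrite (bigD1 (Ordinal xN)) //= eqxx mul1r big1 ?addr0 //.
move=> k /negbTE; rewrite -val_eqE /= => ->; by rewrite mul0r.
Qed.

Lemma ev1_mul (M : 'M[R]_N) (v : 'cV[R]_N) x :
  ev1 (M *m v) x = \sum_(c < N) v c 0 * ev1 (col c M) x.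
Proof.
rewrite /ev1 (eq_bigr (fun r : 'I_N => \sum_(c < N) v c 0 * (M r c * x ^+ r))); last first.
  by move=> r _; rewrite mxE mulr_suml; apply: eq_bigr => c _; ring.
rewrite exchange_big /=; apply: eq_bigr => c _; rewrite mulr_sumr; apply: eq_bigr => r _.
by rewrite mxE.
Qed.

Lemma ev2_mul (M : 'M[R]_(N * N)) (v : 'cV[R]_(N * N)) a b :
  ev2 (M *m v) a b = \sum_(c < N * N) v c 0 * ev2 (col c M) a b.
Proof.
rewrite /ev2 (eq_bigr (fun r : 'I_(N * N) => \sum_(c < N * N) v c 0 * (M r c * a ^+ ((r %/ N)%N) * b ^+ ((r %% N)%N)))); last first.
  by move=> r _; rewrite mxE !mulr_suml; apply: eq_bigr => c _; ring.
rewrite exchange_big /=; apply: eq_bigr => c _; rewrite mulr_sumr; apply: eq_bigr => r _.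
by rewrite mxE.
Qed.

Lemma ev2_fun (v : 'cV[R]_(N * N)) (f : nat -> nat -> R) a b :
  (forall r : 'I_(N * N), v r 0 = f (r %/ N)%N (r %% N)%N) ->
  ev2 v a b = \sum_(k < N) \sum_(l < N) f k l * a ^+ k * b ^+ l.
Proof.
move=> H; rewrite /ev2 (eq_bigr (fun r : 'I_(N * N) => (fun t => f (t %/ N)%N (t %% N)%N * a ^+ ((t %/ N)%N) * b ^+ ((t %% N)%N)) r)); last first.
  by move=> r _; rewrite H.
rewrite (@sum_sq _ N (fun t => f (t %/ N)%N (t %% N)%N * a ^+ ((t %/ N)%N) * b ^+ ((t %% N)%N))); apply: eq_bigr => k _; apply: eq_bigr => l _.
by rewrite divnMDl // divn_small // addn0 modnMDl modn_small.
Qed.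

Lemma mxentryE (K : 'M[R]_N) (i j : 'I_N) : mxentry K i j = K i j.
Proof. by rewrite /mxentry !valK. Qed.

Lemma lawK (nu g : R) (v : 'cV[R]_N) x :
  (2 * x + g) * ev1 (Kra N nu g *m v) x
  = (2 * x + g + 2 * nu) * ev1 v (- x - g) - 2 * nu * ev1 v x.
Proof.
rewrite ev1_mul /ev1 mulr_sumr !mulr_sumr -sumrB; apply: eq_bigr => c _.
rewrite (eq_bigr (fun r : 'I_N => Kra_coef nu g c r * x ^+ r)); last first.
  by move=> r _; rewrite !mxE.
rewrite mulrCA K_law //; ring.
Qed.

Lemma lawK2 (nu g : R) (v : 'cV[R]_(N * N)) a b :
  (2 * b + g) * ev2 (K2 (Kra N nu g) *m v) a b
  = (2 * b + g + 2 * nu) * ev2 v a (- b - g) - 2 * nu * ev2 v a b.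
Proof.
rewrite ev2_mul /ev2 mulr_sumr !mulr_sumr -sumrB; apply: eq_bigr => c _.
have cN : ((c %% N)%N < N)%N by rewrite ltn_pmod.
have kN : ((c %/ N)%N < N)%N by rewrite ltn_divLR // ltn_ord.
rewrite -/(ev2 (col c (K2 (Kra N nu g))) a b).
rewrite (@ev2_fun _ (fun k l => (k == (c %/ N)%N :> nat)%:R * Kra_coef nu g ((c %% N)%N) l)); last first.
  move=> r; rewrite !mxE.
  have rN : ((r %% N)%N < N)%N by rewrite ltn_pmod.
  have -> : mxentry (Kra N nu g) ((r %% N)%N) ((c %% N)%N) = mxentry (Kra N nu g) (Ordinal rN) (Ordinal cN) by [].
  by rewrite mxentryE !mxE.
rewrite (eq_bigr (fun k : 'I_N => (k == (c %/ N)%N :> nat)%:R * (a ^+ k * \sum_(l < N) Kra_coef nu g ((c %% N)%N) l * b ^+ l))); last first.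
  move=> k _; rewrite !mulr_sumr; apply: eq_bigr => l _; ring.
rewrite (@sum_delta _ (fun k => a ^+ k * \sum_(l < N) Kra_coef nu g ((c %% N)%N) l * b ^+ l)) //.
have KL := @K_law _ N (c %% N)%N nu g b cN.
transitivity (v c 0 * a ^+ (c %/ N)%N * ((2 * b + g) * \sum_(l < N) Kra_coef nu g (c %% N)%N l * b ^+ l)); first by ring.
rewrite KL; ring.
Qed.

Definition Rpoly kappa h (i j : nat) (a b : R) :=
  \sum_(k < N) \sum_(l < N) Rra_coef kappa h i j k l * a ^+ k * b ^+ l.

Lemma lawR (kappa h : R) (hh : h != 0) (v : 'cV[R]_(N * N)) a b :
  (a - b + h) * ev2 ((Rra N kappa h *m Pflip R N) *m v) a b
  = (a - b + h + kappa) * ev2 v (b - h) (a + h) - kappa * ev2 v a b.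
Proof.
rewrite ev2_mul /ev2 mulr_sumr !mulr_sumr -sumrB; apply: eq_bigr => c _.
have cN : ((c %% N)%N < N)%N by rewrite ltn_pmod.
have kN : ((c %/ N)%N < N)%N by rewrite ltn_divLR // ltn_ord.
rewrite -/(ev2 (col c (Rra N kappa h *m Pflip R N)) a b).
rewrite colE -mulmxA -colE ev2_mul.
rewrite (eq_bigr (fun t : 'I_(N * N) => (fun t => (((t %/ N)%N == (c %% N)%N) && ((t %% N)%N == (c %/ N)%N))%:R *
            Rpoly kappa h ((t %/ N)%N) ((t %% N)%N) a b) t)); last first.
  move=> t _; rewrite !mxE; congr (_ * _).
  rewrite (@ev2_fun _ (fun k l => Rra_coef kappa h ((t %/ N)%N) ((t %% N)%N) k l)) //.
  by move=> r; rewrite !mxE.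
rewrite (@sum_sq _ N (fun t => (((t %/ N)%N == (c %% N)%N) && ((t %% N)%N == (c %/ N)%N))%:R *
            Rpoly kappa h ((t %/ N)%N) ((t %% N)%N) a b)).
rewrite (eq_bigr (fun k : 'I_N => (k == (c %% N)%N :> nat)%:R * Rpoly kappa h k ((c %/ N)%N) a b)); last first.
  move=> k _.
  rewrite (eq_bigr (fun l : 'I_N => (l == (c %/ N)%N :> nat)%:R * ((k == (c %% N)%N :> nat)%:R * Rpoly kappa h k l a b))); last first.
    move=> l _; have lN := ltn_ord l.
    rewrite divnMDl // (divn_small lN) addn0 modnMDl (modn_small lN).
    by case: (k == (c %% N)%N :> nat); case: (l == (c %/ N)%N :> nat); rewrite /= ?(mul0r, mul1r, mulr0).
  rewrite (@sum_delta _ (fun l => (k == (c %% N)%N :> nat)%:R * Rpoly kappa h k l a b)) //.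
rewrite (@sum_delta _ (fun k => Rpoly kappa h k ((c %/ N)%N) a b)) //.
rewrite mulrCA /Rpoly R_law //; ring.
Qed.

End Laws.

Section Braid.
Variable R : numClosedFieldType.

Definition Kst (nu : R) (F : R -> R -> R) X Y := ((2 * Y + 2 * nu) * F X (- Y) - 2 * nu * F X Y) / (2 * Y).
Definition Rst (kappa : R) (F : R -> R -> R) X Y := ((X - Y + kappa) * F Y X - kappa * F X Y) / (X - Y).

Lemma two_neq0 : (2 : R) != 0. Proof. by rewrite pnatr_eq0. Qed.

Lemma braid_abs (kappa nu u w : R) (F : R -> R -> R) :
  u != 0 -> w != 0 -> u - w != 0 -> u + w != 0 ->
  Rst kappa (Kst nu (Rst kappa (Kst nu F))) u w = Kst nu (Rst kappa (Kst nu (Rst kappa F))) u w.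
Proof.
move=> u0 w0 uw uw'.
have two := two_neq0.
have h1 : w - u != 0 by rewrite -opprB oppr_eq0.
have h2 : - w - u != 0 by rewrite -opprD oppr_eq0 addrC.
rewrite /Kst /Rst !opprK.
field.
by rewrite w0 uw uw' u0 h1 h2.
Qed.

Definition good (X Y : R) := [&& X != 0, Y != 0, X - Y != 0 & X + Y != 0].
Definition agree (F G : R -> R -> R) := forall X Y, good X Y -> F X Y = G X Y.

Lemma good_swap X Y : good X Y -> good Y X.
Proof.
case/and4P => H1 H2 H3 H4; apply/and4P; split => //.
  by rewrite -opprB oppr_eq0.
by rewrite addrC.
Qed.

Lemma good_neg X Y : good X Y -> good X (- Y).
Proof.
case/and4P => H1 H2 H3 H4; apply/and4P; split => //.
- by rewrite oppr_eq0.
- by rewrite opprK.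
Qed.

Lemma agreeK nu F G : agree F G -> agree (Kst nu F) (Kst nu G).
Proof. by move=> H X Y g; rewrite /Kst !H // good_neg. Qed.

Lemma agreeR kappa F G : agree F G -> agree (Rst kappa F) (Rst kappa G).
Proof. by move=> H X Y g; rewrite /Rst !H // good_swap. Qed.

Lemma agree_trans F G H : agree F G -> agree G H -> agree F H.
Proof. by move=> A B X Y g; rewrite A // B. Qed.

Variable N : nat.
Hypothesis N0 : (0 < N)%N.
Variables kappa h nu g : R.
Hypothesis hh : h != 0.

Let c2 := g / 2.
Let c1 := c2 + h.
Definition Psi (v : 'cV[R]_(N * N)) X Y := ev2 v (X - c1) (Y - c2).
Definition Phi (v : 'cV[R]_N) X := ev1 v (X - c2).

Let Km := Kra N nu g.
Let Rc := Rra N kappa h *m Pflip R N.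
Let K2m := K2 Km.

Lemma agree_K2 v : agree (Psi (K2m *m v)) (Kst nu (Psi v)).
Proof.
move=> X Y /and4P [_ Y0 _ _].
have := @lawK2 R N N0 nu g v (X - c1) (Y - c2).
have two := two_neq0.
rewrite (_ : 2 * (Y - c2) + g = 2 * Y); last by rewrite /c2; field.
rewrite (_ : - (Y - c2) - g = - Y - c2); last by rewrite /c2; field.
rewrite /Kst /Psi -/Km -/K2m => <-.
by field; rewrite ?two ?Y0.
Qed.

Lemma agree_R v : agree (Psi (Rc *m v)) (Rst kappa (Psi v)).
Proof.
move=> X Y /and4P [_ _ XY _].
have := @lawR R N N0 kappa h hh v (X - c1) (Y - c2).
rewrite (_ : X - c1 - (Y - c2) + h = X - Y); last by rewrite /c1; ring.
rewrite (_ : Y - c2 - h = Y - c1); last by rewrite /c1; ring.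
rewrite (_ : X - c1 + h = X - c2); last by rewrite /c1; ring.
rewrite /Rst /Psi -/Rc => <-.
by field.
Qed.

Lemma ev2B (x y : 'cV[R]_(N * N)) a b : ev2 (x - y) a b = ev2 x a b - ev2 y a b.
Proof. by rewrite /ev2 -sumrB; apply: eq_bigr => r _; rewrite !mxE; ring. Qed.

Lemma ev1B (x y : 'cV[R]_N) a : ev1 (x - y) a = ev1 x a - ev1 y a.
Proof. by rewrite /ev1 -sumrB; apply: eq_bigr => r _; rewrite !mxE; ring. Qed.

Lemma mx_eq_vec n (A B : 'M[R]_n) : (forall v : 'cV[R]_n, A *m v = B *m v) -> A = B.
Proof.
move=> H; apply/matrixP => i j.
have := congr1 (fun M : 'cV[R]_n => M i 0) (H (delta_mx j 0)).
by rewrite -!colE !mxE.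
Qed.

Lemma mul4 n (A B C D : 'M[R]_n) (v : 'cV[R]_n) :
  (A *m B *m C *m D) *m v = A *m (B *m (C *m (D *m v))).
Proof. by rewrite !mulmxA. Qed.

Lemma braid_mx : Rc *m K2m *m Rc *m K2m = K2m *m Rc *m K2m *m Rc.
Proof.
apply: mx_eq_vec => v.
apply/eqP; rewrite -subr_eq0; apply/eqP.
apply: (@ev2_inj R N _ (- c1) (fun a => [:: - c2; a + c1 - c2; - (a + c1) - c2])) => // a b an0 bn.
have gd : good (a + c1) (b + c2).
  move: bn; rewrite !inE !negb_or => /and3P [b1 b2 b3].
  apply/and4P; split.
  - by move: an0; apply: contra; rewrite addr_eq0.
  - by move: b1; apply: contra; rewrite addr_eq0.
  - move: b2; apply: contra => /eqP E; apply/eqP.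
    by transitivity (a + c1 - c2 - (a + c1 - (b + c2))); [ring | rewrite E subr0].
  - move: b3; apply: contra => /eqP E; apply/eqP.
    by transitivity (- (a + c1) - c2 + (a + c1 + (b + c2))); [ring | rewrite E addr0].
rewrite ev2B.
have -> : a = (a + c1) - c1 by ring.
have -> : b = (b + c2) - c2 by ring.
rewrite -/(Psi _ (a + c1) (b + c2)) -/(Psi _ (a + c1) (b + c2)).
apply/eqP; rewrite subr_eq0; apply/eqP.
rewrite (mul4 Rc K2m Rc K2m) (mul4 K2m Rc K2m Rc).
have AL : agree (Psi (Rc *m (K2m *m (Rc *m (K2m *m v))))) (Rst kappa (Kst nu (Rst kappa (Kst nu (Psi v))))).
  apply: agree_trans (agree_R _) _; apply: agreeR.
  apply: agree_trans (agree_K2 _) _; apply: agreeK.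
  apply: agree_trans (agree_R _) _; apply: agreeR.
  exact: agree_K2.
have AR : agree (Psi (K2m *m (Rc *m (K2m *m (Rc *m v))))) (Kst nu (Rst kappa (Kst nu (Rst kappa (Psi v))))).
  apply: agree_trans (agree_K2 _) _; apply: agreeK.
  apply: agree_trans (agree_R _) _; apply: agreeR.
  apply: agree_trans (agree_K2 _) _; apply: agreeK.
  exact: agree_R.
rewrite AL // AR //.
by case/and4P: gd => H1 H2 H3 H4; apply: braid_abs.
Qed.

Lemma K_sq : Km *m Km = 1%:M.
Proof.
apply: mx_eq_vec => v; rewrite mul1mx.
apply/eqP; rewrite -subr_eq0; apply/eqP.
have two := two_neq0.
have L : forall u X, X != 0 -> Phi (Km *m u) X = ((2 * X + 2 * nu) * Phi u (- X) - 2 * nu * Phi u X) / (2 * X).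
  move=> u X X0.
  have := @lawK R N nu g u (X - c2).
  rewrite (_ : 2 * (X - c2) + g = 2 * X); last by rewrite /c2; field.
  rewrite (_ : - (X - c2) - g = - X - c2); last by rewrite /c2; field.
  rewrite /Phi -/Km => <-.
  by field; rewrite ?two ?X0.
apply: (@ev1_inj R N _ [:: - c2]) => x; rewrite inE => xn.
have X0 : x + c2 != 0 by move: xn; apply: contra; rewrite addr_eq0.
rewrite ev1B.
have -> : x = (x + c2) - c2 by ring.
rewrite -/(Phi _ (x + c2)) -/(Phi _ (x + c2)) -mulmxA.
rewrite (L (Km *m v) (x + c2) X0) (L v (x + c2) X0).
have X1 : - (x + c2) != 0 by rewrite oppr_eq0.
rewrite (L v _ X1).
rewrite opprK; apply/eqP; rewrite subr_eq0; apply/eqP.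
by field; rewrite ?two ?X0.
Qed.

End Braid.

Theorem mainTheorem10 (R : numClosedFieldType) (N : nat) (kappa h nu g : R)
  (hN : (1 <= N)%N) (hh : h != 0) :
  let K := Kra N nu g in
  let Rc := Rra N kappa h *m Pflip R N in
  let K2m := K2 K in
  K *m K = 1%:M /\
  Rc *m K2m *m Rc *m K2m = K2m *m Rc *m K2m *m Rc.
Proof.
move=> K Rc K2m; split.
  exact: K_sq.
exact: braid_mx.
Qed.
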